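(* Let $x_0\in\mathbb{R}$ and suppose $\displaystyle \lim_{n\to\infty}\frac{p_n(x_0)^2}{K_n(x_0,x_0)}=0$. Then $\limsup_{n\to\infty}K_n(x_0,x_0)^{1/n}\le1$, and in particular $\limsup_{n\to\infty}\big(p_n(x_0)^2+p_{n+1}(x_0)^2\big)^{1/n}\le1$.
   Context: Let $\rho$ be a probability measure on $\mathbb{R}$ with compact but infinite support, $p_n$ ($n\ge0$) its orthonormal polynomials (real coefficients, positive leading coefficient, $p_0=1$), and $K_n(x,y)=\sum_{j=0}^n p_j(x)p_j(y)$. *)

(* Defs.v *)
From Stdlib Require Import Reals Lra.
Open Scope R_scope.

(* A probability measure rho on R with compact infinite support is encoded by
   its moment sequence m k = \int x^k d rho.
   Polynomials are encoded by coefficient functions c : nat -> R together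
   with a degree bound d (coefficients of x^0 .. x^d). *)

Definition peval (c : nat -> R) (d : nat) (x : R) : R :=
  sum_f_R0 (fun k => c k * x ^ k) d.

(* the bilinear form  \int P Q d rho  for P = sum_{i<=d} c_i x^i,
   Q = sum_{j<=e} c'_j x^j *)
Definition mform (m : nat -> R) (c : nat -> R) (d : nat) (c' : nat -> R) (e : nat) : R :=
  sum_f_R0 (fun i => sum_f_R0 (fun j => c i * c' j * m (i + j)%nat) e) d.

(* m is the moment sequence of a probability measure on R with compact,
   infinite support:
   - total mass 1;
   - \int P^2 d rho > 0 for every nonzero polynomial P (infinite support);
   - |m_k| <= M^k for some M (compact support). *)
Definition cpt_inf_prob_moments (m : nat -> R) : Prop :=
  m 0%nat = 1 /\
  (forall (d : nat) (c : nat -> R),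
      (exists k, (k <= d)%nat /\ c k <> 0) -> 0 < mform m c d c d) /\
  (exists M : R, forall k, Rabs (m k) <= M ^ k).

Definition orthonormal_polys (m : nat -> R) (p : nat -> nat -> R) : Prop :=
  (forall n k, (n < k)%nat -> p n k = 0) /\
  (forall n, 0 < p n n) /\
  (forall n n', mform m (p n) n (p n') n' = if Nat.eqb n n' then 1 else 0).

Definition pe (p : nat -> nat -> R) (n : nat) (x : R) : R := peval (p n) n x.

Definition Kn (p : nat -> nat -> R) (n : nat) (x y : R) : R :=
  sum_f_R0 (fun j => pe p j x * pe p j y) n.

(* Main.v *)
Require Import Defs.
From Stdlib Require Import Reals Lra Lia.
Open Scope R_scope.

Lemma ln_le' x y : 0 < x -> x <= y -> ln x <= ln y.
Proof. intros Hx Hxy. destruct (Req_dec x y) as [->|H]; [lra|].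
  left; apply ln_increasing; lra. Qed.

Lemma exp_le' x y : x <= y -> exp x <= exp y.
Proof. intros H. destruct (Req_dec x y) as [->|H']; [lra|].
  left; apply exp_increasing; lra. Qed.

Lemma ln_nonpos x : x <= 0 -> ln x = 0.
Proof. intros H. unfold ln. destruct (Rlt_dec 0 x) as [h|h]; [exfalso; lra|reflexivity]. Qed.

Lemma final_lemma (g : nat -> R) :
  (forall q, 1 < q -> exists C, 0 < C /\ forall n, g n <= C * q ^ (S n)) ->
  forall eps : R, 0 < eps -> exists N : nat, forall n : nat, (N <= n)%nat ->
     Rpower (g n) (1 / INR n) <= 1 + eps.
Proof.
  intros Hg eps Heps.
  set (L := ln (1 + eps)).
  assert (HL : 0 < L). { unfold L; rewrite <- ln_1; apply ln_increasing; lra. }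
  set (q := exp (L / 4)).
  assert (Hq : 1 < q). { unfold q; rewrite <- exp_0; apply exp_increasing; lra. }
  destruct (Hg q Hq) as [C [HC HgC]].
  destruct (INR_unbounded (2 * Rabs (ln C) / L)) as [N0 HN0].
  exists (S N0). intros n Hn.
  assert (HnN : INR N0 <= INR n) by (apply le_INR; lia).
  assert (Hn1 : 1 <= INR n) by (replace 1 with (INR 1) by reflexivity; apply le_INR; lia).
  assert (HeL : exp L = 1 + eps) by (unfold L; apply exp_ln; lra).
  unfold Rpower. rewrite <- HeL. apply exp_le'.
  destruct (Rle_or_lt (g n) 0) as [H0|H0].
  { rewrite ln_nonpos by lra. rewrite Rmult_0_r; lra. }
  assert (Hlg : ln (g n) <= ln C + INR (S n) * (L / 4)).
  { rewrite <- (ln_exp (L/4)). fold q. rewrite <- ln_pow by lra.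
    rewrite <- ln_mult by (auto; apply pow_lt; lra). apply ln_le'; auto. }
  rewrite S_INR in Hlg.
  assert (Habs : ln C <= Rabs (ln C)) by apply Rle_abs.
  assert (H2 : 2 * Rabs (ln C) < INR n * L).
  { assert (2 * Rabs (ln C) / L * L = 2 * Rabs (ln C)) by (field; lra).
    nra. }
  assert (Hk : ln (g n) <= INR n * L) by nra.
  assert (0 < INR n) by lra.
  apply Rle_trans with (1 / INR n * (INR n * L)); [|right; field; lra].
  apply Rmult_le_compat_l; [|exact Hk].
  left; apply Rdiv_lt_0_compat; lra.
Qed.

Lemma sum_ge_term (a : nat -> R) n : (forall k, 0 <= a k) -> a n <= sum_f_R0 a n.
Proof. intros Ha. destruct n; simpl; [lra|]. pose proof (cond_pos_sum a n Ha). lra. Qed.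

Lemma sum_mono (a : nat -> R) i j : (forall k, 0 <= a k) -> (i <= j)%nat ->
  sum_f_R0 a i <= sum_f_R0 a j.
Proof. intros Ha Hij. induction Hij; [lra|]. simpl. pose proof (Ha (S m)). lra. Qed.

Lemma sum_pos (a : nat -> R) n : (forall k, 0 <= a k) -> 0 < a 0%nat -> 0 < sum_f_R0 a n.
Proof. intros Ha H0. pose proof (sum_mono a 0 n Ha ltac:(lia)). simpl in H. lra. Qed.

Lemma growth (a : nat -> R) : (forall k, 0 <= a k) -> 0 < a 0%nat ->
  Un_cv (fun n => a n / sum_f_R0 a n) 0 ->
  forall q, 1 < q -> exists C, 0 < C /\ forall n, sum_f_R0 a n <= C * q ^ n.
Proof.
  intros Ha H0 Hcv q Hq.
  set (r := (q - 1) / q).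
  assert (Hr : 0 < r) by (unfold r; apply Rdiv_lt_0_compat; lra).
  destruct (Hcv r Hr) as [N HN].
  exists (sum_f_R0 a N). split; [apply sum_pos; auto|].
  induction n.
  - simpl (q ^ 0). rewrite Rmult_1_r. apply sum_mono; auto; lia.
  - destruct (Compare_dec.le_lt_dec (S n) N) as [Hle|Hlt].
    + pose proof (sum_mono a _ _ Ha Hle).
      pose proof (pow_R1_Rle q (S n) ltac:(lra)).
      pose proof (sum_pos a N Ha H0). nra.
    + assert (HSn : (S n >= N)%nat) by lia.
      specialize (HN (S n) HSn). unfold R_dist in HN.
      rewrite Rminus_0_r in HN.
      pose proof (sum_pos a (S n) Ha H0) as HK.
      assert (Hd : a (S n) / sum_f_R0 a (S n) < r) by (eapply Rle_lt_trans; [apply Rle_abs|exact HN]).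
      assert (Ha' : a (S n) < r * sum_f_R0 a (S n)).
      { apply (Rmult_lt_compat_r (sum_f_R0 a (S n))) in Hd; auto.
        unfold Rdiv in Hd. rewrite Rmult_assoc, Rinv_l in Hd; lra. }
      assert (Hs : sum_f_R0 a (S n) = sum_f_R0 a n + a (S n)) by reflexivity.
      assert (Hstep : sum_f_R0 a (S n) <= q * sum_f_R0 a n).
      { assert (Hrq : r * q = q - 1) by (unfold r; field; lra).
        nra. }
      simpl (q ^ S n). nra.
Qed.

Theorem proposition3p1 (m : nat -> R) (p : nat -> nat -> R) (x0 : R) :
  cpt_inf_prob_moments m ->
  orthonormal_polys m p ->
  Un_cv (fun n => (pe p n x0) ^ 2 / Kn p n x0 x0) 0 ->
  (* limsup_n K_n(x0,x0)^(1/n) <= 1 *)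
  (forall eps : R, 0 < eps -> exists N : nat, forall n : nat, (N <= n)%nat ->
     Rpower (Kn p n x0 x0) (1 / INR n) <= 1 + eps) /\
  (* limsup_n (p_n(x0)^2 + p_{n+1}(x0)^2)^(1/n) <= 1 *)
  (forall eps : R, 0 < eps -> exists N : nat, forall n : nat, (N <= n)%nat ->
     Rpower ((pe p n x0) ^ 2 + (pe p (S n) x0) ^ 2) (1 / INR n) <= 1 + eps).
Proof.
  intros _ [_ [Hlead _]] Hcv.
  set (a := fun n => pe p n x0 ^ 2).
  assert (Ha : forall k, 0 <= a k) by (intro k; unfold a; apply pow2_ge_0).
  assert (H0 : 0 < a 0%nat).
  { unfold a, pe, peval. simpl. specialize (Hlead 0%nat). nra. }
  assert (HK : forall n, Kn p n x0 x0 = sum_f_R0 a n).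
  { intro n. unfold Kn. apply sum_eq. intros i _. unfold a. ring. }
  assert (Hcv' : Un_cv (fun n => a n / sum_f_R0 a n) 0).
  { intros e He. destruct (Hcv e He) as [N HN]. exists N. intros n Hn.
    rewrite <- HK. apply HN; auto. }
  pose proof (growth a Ha H0 Hcv') as Hgr.
  split.
  - apply final_lemma. intros q Hq. destruct (Hgr q Hq) as [C [HC HCn]].
    exists C. split; auto. intro n. rewrite HK.
    apply Rle_trans with (sum_f_R0 a (S n)); [apply sum_mono; auto|apply HCn].
  - apply final_lemma. intros q Hq. destruct (Hgr q Hq) as [C [HC HCn]].
    exists C. split; auto. intro n.
    apply Rle_trans with (sum_f_R0 a (S n)); [|apply HCn].
    change (a n + a (S n) <= sum_f_R0 a n + a (S n)).
    pose proof (sum_ge_term a n Ha). lra.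
Qed.
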